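(* Let $\mathcal{K}^{\langle\infty\rangle}$ be an unbounded simple nested fractal. Then $$\inf\big\{\mathrm{dist}(\Delta_0^{(1)},\Delta_0^{(2)}):\ \Delta_0^{(1)},\Delta_0^{(2)}\in\mathcal{T}_0,\ \Delta_0^{(1)}\cap\Delta_0^{(2)}=\emptyset\big\}>0.$$
   Context: Setting: $L>1$, $N\ge2$, $\nu_1=0,\dots,\nu_N\in\mathbb{R}^2$, $\Psi_i(x)=x/L+\nu_i$, and $\mathcal{K}^{\langle 0\rangle}=\bigcup_i\Psi_i(\mathcal{K}^{\langle 0\rangle})$ is a planar simple nested fractal (with $V_0^{\langle0\rangle}$ its set of essential fixed points, $k=\#V_0^{\langle0\rangle}\ge3$). $\mathcal{K}^{\langle M\rangle}=L^M\mathcal{K}^{\langle 0\rangle}$ for $M\in\mathbb{Z}$, $\mathcal{K}^{\langle\infty\rangle}=\bigcup_{M\ge0}\mathcal{K}^{\langle M\rangle}$. An $M$-complex is $\Delta_M=\mathcal{K}^{\langle M\rangle}+\sum_{j=M+1}^{J}L^j\nu_{i_j}$ for some $J\ge M+1$ and $i_j\in\{1,\dots,N\}$; $\mathcal{T}_M$ is the set of all $M$-complexes. For closed bounded $E,F$, $\mathrm{dist}(E,F)=\inf\{|x-y|:x\in E,y\in F\}$ (Euclidean). *)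

(* Defs.v *)
From Stdlib Require Import Reals Lra List.
Import ListNotations.
Open Scope R_scope.

Definition pt := (R * R)%type.
Definition padd (x y : pt) : pt := (fst x + fst y, snd x + snd y).
Definition psub (x y : pt) : pt := (fst x - fst y, snd x - snd y).
Definition pscale (a : R) (x : pt) : pt := (a * fst x, a * snd x).
Definition pdot (x y : pt) : R := fst x * fst y + snd x * snd y.
Definition pnorm (x : pt) : R := sqrt (pdot x x).
Definition pdist (x y : pt) : R := pnorm (psub x y).

(* The similitudes Psi_i(x) = x/L + nu_i; the paper's indices 1..N are
   encoded as 0..N-1, so nu_1 = 0 becomes nu 0 = (0,0). *)
Definition Psi (L : R) (nu : nat -> pt) (i : nat) (x : pt) : pt :=
  padd (pscale (/ L) x) (nu i).

Definition image (f : pt -> pt) (A : pt -> Prop) : pt -> Prop :=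
  fun y => exists x, A x /\ y = f x.

Definition pbounded (A : pt -> Prop) : Prop :=
  exists r, forall x, A x -> pnorm x <= r.
Definition closed_set (A : pt -> Prop) : Prop :=
  forall x, (forall eps, 0 < eps -> exists y, A y /\ pdist x y < eps) -> A x.
Definition open_set (A : pt -> Prop) : Prop :=
  forall x, A x -> exists eps, 0 < eps /\ forall y, pdist x y < eps -> A y.
Definition compact_set (A : pt -> Prop) : Prop := closed_set A /\ pbounded A.

Definition is_attractor (L : R) (N : nat) (nu : nat -> pt) (K : pt -> Prop) : Prop :=
  (exists x, K x) /\ compact_set K /\
  forall x, K x <-> exists i, (i < N)%nat /\ image (Psi L nu i) K x.

Definition fixpts (L : R) (N : nat) (nu : nat -> pt) (x : pt) : Prop :=
  exists i, (i < N)%nat /\ Psi L nu i x = x.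

Definition V0 (L : R) (N : nat) (nu : nat -> pt) (x : pt) : Prop :=
  fixpts L N nu x /\
  exists i j y, (i < N)%nat /\ (j < N)%nat /\ i <> j /\ fixpts L N nu y /\
    Psi L nu i x = Psi L nu j y.

Fixpoint Vn (L : R) (N : nat) (nu : nat -> pt) (n : nat) : pt -> Prop :=
  match n with
  | O => V0 L N nu
  | S m => fun x => exists i, (i < N)%nat /\ image (Psi L nu i) (Vn L N nu m) x
  end.

(* reflection in the perpendicular bisector of the segment [x,y] *)
Definition refl (x y z : pt) : pt :=
  let d := psub x y in
  let m := pscale (1/2) (padd x y) in
  psub z (pscale (2 * pdot (psub z m) d / pdot d d) d).

Definition open_set_condition (L : R) (N : nat) (nu : nat -> pt) : Prop :=
  exists U : pt -> Prop, open_set U /\ pbounded U /\ (exists x, U x) /\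
    (forall i x, (i < N)%nat -> image (Psi L nu i) U x -> U x) /\
    (forall i j x, (i < N)%nat -> (j < N)%nat -> i <> j ->
        ~ (image (Psi L nu i) U x /\ image (Psi L nu j) U x)).

Definition connectivity (L : R) (N : nat) (nu : nat -> pt) : Prop :=
  forall i j, (i < N)%nat -> (j < N)%nat ->
  exists (m : nat) (c : nat -> nat), c O = i /\ c m = j /\
    (forall l, (l <= m)%nat -> (c l < N)%nat) /\
    (forall l, (l < m)%nat -> exists z,
        image (Psi L nu (c l)) (V0 L N nu) z /\
        image (Psi L nu (c (S l))) (V0 L N nu) z).

Definition symmetry (L : R) (N : nat) (nu : nat -> pt) : Prop :=
  forall x y, V0 L N nu x -> V0 L N nu y -> x <> y ->
  forall n z, Vn L N nu n z -> Vn L N nu n (refl x y z).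

Definition nesting (L : R) (N : nat) (nu : nat -> pt) (K : pt -> Prop) : Prop :=
  forall i j, (i < N)%nat -> (j < N)%nat -> i <> j -> forall z,
    (image (Psi L nu i) K z /\ image (Psi L nu j) K z) <->
    (image (Psi L nu i) (V0 L N nu) z /\ image (Psi L nu j) (V0 L N nu) z).

(* planar simple nested fractal K^<0> generated by Psi_i(x) = x/L + nu_i,
   with k = #V_0 >= 3 *)
Definition simple_nested_fractal (L : R) (N : nat) (nu : nat -> pt) (K : pt -> Prop) : Prop :=
  1 < L /\ (2 <= N)%nat /\ nu O = (0, 0) /\
  is_attractor L N nu K /\
  (exists a b c, V0 L N nu a /\ V0 L N nu b /\ V0 L N nu c /\
      a <> b /\ b <> c /\ a <> c) /\
  open_set_condition L N nu /\ connectivity L N nu /\ symmetry L N nu /\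
  nesting L N nu K.

Definition Kinf (L : R) (K : pt -> Prop) : pt -> Prop :=
  fun x => exists M : nat, image (pscale (L ^ M)) K x.

Definition complex0 (L : R) (N : nat) (nu : nat -> pt) (K : pt -> Prop)
  (D : pt -> Prop) : Prop :=
  exists (J : nat) (w : nat -> nat), (1 <= J)%nat /\
    (forall j, (1 <= j <= J)%nat -> (w j < N)%nat) /\
    let s := fold_right padd (0, 0)
               (map (fun j => pscale (L ^ j) (nu (w j))) (seq 1 J)) in
    forall x, D x <-> K (psub x s).

(* Main.v *)
Require Import Defs.
From Stdlib Require Import Reals.
From Stdlib Require Import Lra Lia List Classical ClassicalEpsilon.
Import ListNotations.
Open Scope R_scope.

Lemma pnorm_pos v : 0 <= pnorm v.
Proof. apply sqrt_pos. Qed.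

Lemma pnorm_fst v : Rabs (fst v) <= pnorm v.
Proof.
  destruct v as [a b]; unfold pnorm, pdot; simpl.
  rewrite <- sqrt_Rsqr_abs. apply sqrt_le_1_alt. unfold Rsqr. nra.
Qed.

Lemma pnorm_snd v : Rabs (snd v) <= pnorm v.
Proof.
  destruct v as [a b]; unfold pnorm, pdot; simpl.
  rewrite <- sqrt_Rsqr_abs. apply sqrt_le_1_alt. unfold Rsqr. nra.
Qed.

Lemma pnorm_le_sum v : pnorm v <= Rabs (fst v) + Rabs (snd v).
Proof.
  destruct v as [a b]; unfold pnorm, pdot; simpl.
  assert (H: 0 <= Rabs a + Rabs b) by (pose proof (Rabs_pos a); pose proof (Rabs_pos b); lra).
  rewrite <- (sqrt_square _ H). apply sqrt_le_1_alt.
  pose proof (Rabs_pos a); pose proof (Rabs_pos b).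
  assert (a * a = Rabs a * Rabs a) by (rewrite <- Rabs_mult; rewrite Rabs_right; nra).
  assert (b * b = Rabs b * Rabs b) by (rewrite <- Rabs_mult; rewrite Rabs_right; nra).
  nra.
Qed.

Lemma pnorm_scale c v : pnorm (pscale c v) = Rabs c * pnorm v.
Proof.
  destruct v as [a b]; unfold pnorm, pdot, pscale; simpl.
  replace (c * a * (c * a) + c * b * (c * b)) with (Rsqr c * (a * a + b * b)) by (unfold Rsqr; ring).
  rewrite sqrt_mult_alt. rewrite sqrt_Rsqr_abs. reflexivity.
  apply Rle_0_sqr.
Qed.

Lemma cluster1 (u : nat -> R) r : (forall n, Rabs (u n) <= r) ->
  exists l, forall eps, 0 < eps -> forall N, exists p, (N <= p)%nat /\ Rabs (u p - l) < eps.
Proof.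
  intros Hb.
  destruct (Bolzano_Weierstrass u (fun c => -r <= c <= r)) as [l Hl].
  - apply compact_P3.
  - intros n; specialize (Hb n); unfold Rabs in Hb; destruct (Rcase_abs (u n)); lra.
  - exists l. intros eps He N.
    destruct (Hl (disc l (mkposreal eps He)) N) as [p [Hp Hd]].
    + exists (mkposreal eps He). intros y Hy; exact Hy.
    + exists p; split; auto.
Qed.

Lemma small_inv eps : 0 < eps -> exists M, / INR (S M) < eps.
Proof.
  intros He. destruct (INR_unbounded (/ eps)) as [M HM]. exists M.
  rewrite S_INR. pose proof (pos_INR M).
  apply (Rmult_lt_reg_l (INR M + 1)). lra.
  rewrite Rinv_r by lra.
  assert (/ eps * eps = 1) by (field; lra).
  assert (1 < (INR M + 1) * eps); [|lra].
  apply (Rmult_lt_reg_l (/eps)). apply Rinv_0_lt_compat; lra. nra.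
Qed.

Lemma inv_S_mono m M : (M <= m)%nat -> / INR (S m) <= / INR (S M).
Proof.
  intros H. apply Rinv_le_contravar. apply lt_0_INR; lia. apply le_INR; lia.
Qed.

Lemma inv_S_pos n : 0 < / INR (S n).
Proof. apply Rinv_0_lt_compat. apply lt_0_INR; lia. Qed.

Lemma cluster2 (a : nat -> pt) r :
  (forall n, Rabs (fst (a n)) <= r /\ Rabs (snd (a n)) <= r) ->
  exists c, forall eps, 0 < eps -> forall N, exists p, (N <= p)%nat /\
     Rabs (fst (a p) - fst c) < eps /\ Rabs (snd (a p) - snd c) < eps.
Proof.
  intros Hb.
  destruct (cluster1 (fun n => fst (a n)) r) as [l1 H1]. { intros n; apply Hb. }
  assert (Hp : forall n, exists p, (n <= p)%nat /\ Rabs (fst (a p) - l1) < / INR (S n)).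
  { intros n. apply H1. apply inv_S_pos. }
  set (psi := fun n => proj1_sig (constructive_indefinite_description _ (Hp n))).
  assert (Hpsi : forall n, (n <= psi n)%nat /\ Rabs (fst (a (psi n)) - l1) < / INR (S n)).
  { intros n. unfold psi. destruct (constructive_indefinite_description _ (Hp n)); simpl; auto. }
  destruct (cluster1 (fun n => snd (a (psi n))) r) as [l2 H2]. { intros n; apply Hb. }
  exists (l1, l2). intros eps He N.
  destruct (small_inv eps He) as [M HM].
  destruct (H2 eps He (max N M)) as [m [Hm Hm2]].
  exists (psi m). destruct (Hpsi m) as [Hq1 Hq2]. simpl.
  split; [lia|]. split; auto.
  pose proof (inv_S_mono m M ltac:(lia)). lra.
Qed.

Lemma sep_pos (K : pt -> Prop) d : compact_set K ->
  (forall w, ~ (K w /\ K (padd w d))) ->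
  exists e, 0 < e /\ forall k1 k2, K k1 -> K k2 -> e <= pnorm (psub (padd k1 d) k2).
Proof.
  intros [Hcl [r Hr]] Hdis.
  destruct (classic (exists e, 0 < e /\ forall k1 k2, K k1 -> K k2 -> e <= pnorm (psub (padd k1 d) k2))) as [H|H]; auto.
  exfalso.
  assert (Hn : forall n : nat, exists pq : pt * pt, K (fst pq) /\ K (snd pq) /\
            pnorm (psub (padd (fst pq) d) (snd pq)) < / INR (S n)).
  { intros n. apply NNPP. intros Hc. apply H. exists (/ INR (S n)). split. apply inv_S_pos.
    intros k1 k2 Hk1 Hk2. apply Rnot_lt_le. intros Hlt. apply Hc. exists (k1, k2). simpl; auto. }
  set (s := fun n => proj1_sig (constructive_indefinite_description _ (Hn n))).
  assert (Hs : forall n, K (fst (s n)) /\ K (snd (s n)) /\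
            pnorm (psub (padd (fst (s n)) d) (snd (s n))) < / INR (S n)).
  { intros n. unfold s. destruct (constructive_indefinite_description _ (Hn n)); simpl; auto. }
  destruct (cluster2 (fun n => fst (s n)) r) as [c Hc].
  { intros n. destruct (Hs n) as [H1 _]. pose proof (Hr _ H1).
    pose proof (pnorm_fst (fst (s n))); pose proof (pnorm_snd (fst (s n))). split; lra. }
  apply (Hdis c). split.
  - apply Hcl. intros eps He.
    destruct (Hc (eps/2) ltac:(lra) O) as [p [_ [Hp1 Hp2]]].
    exists (fst (s p)). split. apply (Hs p).
    unfold pdist. eapply Rle_lt_trans. apply pnorm_le_sum.
    destruct c as [c1 c2]; destruct (fst (s p)) as [x1 x2]; simpl in *.
    rewrite Rabs_minus_sym in Hp1. rewrite Rabs_minus_sym in Hp2. lra.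
  - apply Hcl. intros eps He.
    destruct (small_inv (eps/4) ltac:(lra)) as [M HM].
    destruct (Hc (eps/4) ltac:(lra) M) as [p [Hpm [Hp1 Hp2]]].
    exists (snd (s p)). split. apply (Hs p).
    destruct (Hs p) as [_ [_ Hq]].
    pose proof (inv_S_mono p M Hpm).
    pose proof (pnorm_fst (psub (padd (fst (s p)) d) (snd (s p)))).
    pose proof (pnorm_snd (psub (padd (fst (s p)) d) (snd (s p)))).
    unfold pdist. eapply Rle_lt_trans. apply pnorm_le_sum.
    destruct c as [c1 c2]; destruct (fst (s p)) as [x1 x2]; destruct (snd (s p)) as [y1 y2];
    destruct d as [d1 d2]; simpl in *.
    assert (Rabs (c1 + d1 - y1) <= Rabs (c1 - x1) + Rabs (x1 + d1 - y1)).
    { replace (c1 + d1 - y1) with ((c1 - x1) + (x1 + d1 - y1)) by ring. apply Rabs_triang. }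
    assert (Rabs (c2 + d2 - y2) <= Rabs (c2 - x2) + Rabs (x2 + d2 - y2)).
    { replace (c2 + d2 - y2) with ((c2 - x2) + (x2 + d2 - y2)) by ring. apply Rabs_triang. }
    rewrite Rabs_minus_sym in Hp1. rewrite Rabs_minus_sym in Hp2. lra.
Qed.

Fixpoint off (L : R) (nu : nat -> pt) (l : list nat) : pt :=
  match l with
  | [] => (0, 0)
  | a :: m => pscale L (padd (nu a) (off L nu m))
  end.

Definition valid (N : nat) (l : list nat) := forall a, In a l -> (a < N)%nat.

Lemma K_eq (K : pt -> Prop) p q : K p -> p = q -> K q.
Proof. intros H <-; exact H. Qed.

Ltac ptq := unfold Psi, padd, psub, pscale in *; simpl in *; apply injective_projections; simpl.

Lemma off_app L nu q c :
  off L nu (q ++ [c]) = padd (off L nu q) (pscale (L ^ S (length q)) (nu c)).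
Proof.
  induction q as [|a q IH]; simpl.
  - ptq; ring.
  - rewrite IH. ptq; ring.
Qed.

Lemma fix_comp L nu i x : L <> 0 -> Psi L nu i x = x ->
  L * fst x = fst x + L * fst (nu i) /\ L * snd x = snd x + L * snd (nu i).
Proof.
  intros HL H.
  assert (E1 := f_equal fst H); assert (E2 := f_equal snd H).
  unfold Psi, padd, pscale in E1, E2; simpl in E1, E2.
  split.
  - rewrite <- E1 at 1. field. exact HL.
  - rewrite <- E2 at 1. field. exact HL.
Qed.

Lemma psi_K (L : R) (N : nat) (nu : nat -> pt) (K : pt -> Prop) (i : nat) (x : pt) :
  (forall x, K x <-> exists i, (i < N)%nat /\ image (Psi L nu i) K x) ->
  (i < N)%nat -> K x -> K (Psi L nu i x).
Proof.
  intros Hatt Hi Hx. apply Hatt. exists i. split; auto. exists x; auto.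
Qed.

Lemma cellK (L : R) (N : nat) (nu : nat -> pt) (K : pt -> Prop) :
  1 < L ->
  (forall x, K x <-> exists i, (i < N)%nat /\ image (Psi L nu i) K x) ->
  forall q y, valid N q -> K (psub (pscale (L ^ length q) y) (off L nu q)) -> K y.
Proof.
  intros HL Hatt q. induction q as [|a q IH]; intros y Hv Hy; simpl in *.
  - eapply K_eq; [exact Hy|]. destruct y; ptq; ring.
  - apply IH. intros b Hb; apply Hv; now right.
    eapply K_eq. eapply (psi_K L N nu K a _ Hatt). apply Hv; now left. exact Hy.
    ptq; field; lra.
Qed.

Lemma fix_in_K (L : R) (N : nat) (nu : nat -> pt) (K : pt -> Prop) (i : nat) (x : pt) :
  1 < L -> Defs.closed_set K -> (exists k, K k) ->
  (forall x, K x <-> exists i, (i < N)%nat /\ image (Psi L nu i) K x) ->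
  (i < N)%nat -> Psi L nu i x = x -> K x.
Proof.
  intros HL Hcl [k0 Hk0] Hatt Hi Hfix.
  destruct (fix_comp L nu i x ltac:(lra) Hfix) as [F1 F2].
  assert (Hn : forall n, exists y, K y /\ psub x y = pscale ((/ L) ^ n) (psub x k0)).
  { induction n as [|n [y [Hy Hxy]]].
    - exists k0. split; auto. ptq; ring.
    - exists (Psi L nu i y). split. apply (psi_K L N nu K); auto.
      assert (E1 := f_equal fst Hxy); assert (E2 := f_equal snd Hxy).
      ptq.
      { rewrite Rmult_assoc, <- E1. apply (Rmult_eq_reg_l L); [|lra].
        replace (L * (/L * (fst x - fst y))) with (fst x - fst y) by (field; lra).
        replace (L * (fst x - (/L * fst y + fst (nu i)))) with (L * fst x - fst y - L * fst (nu i)) by (field; lra).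
        lra. }
      { rewrite Rmult_assoc, <- E2. apply (Rmult_eq_reg_l L); [|lra].
        replace (L * (/L * (snd x - snd y))) with (snd x - snd y) by (field; lra).
        replace (L * (snd x - (/L * snd y + snd (nu i)))) with (L * snd x - snd y - L * snd (nu i)) by (field; lra).
        lra. } }
  apply Hcl. intros eps He.
  set (M := pnorm (psub x k0)).
  assert (HM : 0 <= M) by apply pnorm_pos.
  assert (HLi : Rabs (/ L) < 1).
  { rewrite Rabs_right. apply (Rmult_lt_reg_l L); [lra|]. rewrite Rinv_r; lra.
    apply Rle_ge, Rlt_le, Rinv_0_lt_compat; lra. }
  destruct (pow_lt_1_zero (/ L) HLi (eps / (M + 1))) as [n0 Hn0].
  { apply Rdiv_lt_0_compat; lra. }
  destruct (Hn n0) as [y [Hy Hxy]]. exists y. split; auto.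
  unfold pdist. rewrite Hxy, pnorm_scale. fold M.
  specialize (Hn0 n0 (le_n _)).
  assert (eps / (M + 1) * M < eps).
  { apply (Rmult_lt_reg_r (M + 1)); [lra|]. unfold Rdiv.
    replace (eps * / (M + 1) * M * (M + 1)) with (eps * M) by (field; lra). nra. }
  pose proof (Rabs_pos ((/ L) ^ n0)). nra.
Qed.

Lemma Lpow_pos L n : 1 < L -> 0 < L ^ n.
Proof. intros; apply pow_lt; lra. Qed.

Lemma scale_back (L : R) n (z y w : pt) : 1 < L ->
  pscale (/ (L * L ^ n)) z = padd (pscale (/ L) y) w ->
  z = padd (pscale (L ^ n) y) (pscale (L * L ^ n) w).
Proof.
  intros HL H. pose proof (Lpow_pos L n HL).
  assert (E1 := f_equal fst H); assert (E2 := f_equal snd H).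
  unfold padd, pscale in *; simpl in *.
  apply injective_projections; simpl.
  - apply (Rmult_eq_reg_l (/ (L * L ^ n))). rewrite E1. field. split; lra.
    apply Rinv_neq_0_compat. nra.
  - apply (Rmult_eq_reg_l (/ (L * L ^ n))). rewrite E2. field. split; lra.
    apply Rinv_neq_0_compat. nra.
Qed.

Lemma corner (L : R) (N : nat) (nu : nat -> pt) (K : pt -> Prop) :
  1 < L -> Defs.closed_set K -> (exists k, K k) ->
  (forall x, K x <-> exists i, (i < N)%nat /\ image (Psi L nu i) K x) ->
  nesting L N nu K ->
  forall n q x, length q = n -> valid N q -> V0 L N nu x ->
  K (psub (pscale (L ^ n) x) (off L nu q)) ->
  exists v, V0 L N nu v /\ pscale (L ^ n) x = padd v (off L nu q).
Proof.
  intros HL Hcl HK0 Hatt Hnest n. induction n as [|n IH]; intros q x Hlen Hv Hx HK.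
  - destruct q; [|discriminate]. exists x. split; auto. ptq; ring.
  - assert (Hne : q <> []) by (intro; subst; discriminate).
    destruct (exists_last Hne) as [q' [c Hq]]. subst q.
    rewrite length_app in Hlen; simpl in Hlen. assert (Hl' : length q' = n) by lia.
    assert (Hv' : valid N q') by (intros b Hb; apply Hv; apply in_or_app; left; auto).
    assert (Hc : (c < N)%nat) by (apply Hv; apply in_or_app; right; simpl; auto).
    rewrite off_app, Hl' in HK |- *.
    pose proof (Lpow_pos L n HL) as HLn.
    pose proof Hx as Hx'; destruct Hx' as [[i [Hi Hfix]] _].
    destruct (Nat.eq_dec c i) as [-> | Hci].
    + destruct (fix_comp L nu i x ltac:(lra) Hfix) as [F1 F2].
      assert (G1 : L ^ n * (L * fst x) = L ^ n * (fst x + L * fst (nu i))) by (rewrite F1; reflexivity).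
      assert (G2 : L ^ n * (L * snd x) = L ^ n * (snd x + L * snd (nu i))) by (rewrite F2; reflexivity).
      destruct (IH q' x Hl' Hv' Hx) as [v [Hv0 Hveq]].
      { eapply K_eq; [exact HK|]. ptq; lra. }
      exists v. split; auto.
      assert (E1 := f_equal fst Hveq); assert (E2 := f_equal snd Hveq).
      ptq; lra.
    + set (k := pscale L (psub x (nu c))).
      assert (Hk : K k).
      { apply (cellK L N nu K HL Hatt q' k Hv'). rewrite Hl'. eapply K_eq; [exact HK|].
        unfold k; ptq; ring. }
      assert (HxK : K x) by (eapply (fix_in_K L N nu K i x); eauto).
      assert (Him : image (Psi L nu c) K x /\ image (Psi L nu i) K x).
      { split.
        - exists k. split; [exact Hk|]. unfold k; ptq; field; lra.
        - exists x. split; [exact HxK|]. symmetry; exact Hfix. }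
      apply (Hnest c i Hc Hi Hci x) in Him. destruct Him as [[y [Hy0 Hxy]] _].
      subst x.
      destruct (IH q' y Hl' Hv' Hy0) as [v [Hv0 Hveq]].
      { eapply K_eq; [exact HK|]. ptq; field; lra. }
      exists v. split; auto.
      assert (E1 := f_equal fst Hveq); assert (E2 := f_equal snd Hveq).
      ptq.
      * assert (L * L ^ n * (/ L * fst y + fst (nu c)) = L ^ n * fst y + L * L ^ n * fst (nu c)) by (field; lra).
        lra.
      * assert (L * L ^ n * (/ L * snd y + snd (nu c)) = L ^ n * snd y + L * L ^ n * snd (nu c)) by (field; lra).
        lra.
Qed.

Lemma vertex (L : R) (N : nat) (nu : nat -> pt) (K : pt -> Prop) :
  1 < L -> Defs.closed_set K -> (exists k, K k) ->
  (forall x, K x <-> exists i, (i < N)%nat /\ image (Psi L nu i) K x) ->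
  nesting L N nu K -> (exists a, V0 L N nu a) ->
  forall n l1 l2 z, length l1 = n -> length l2 = n -> valid N l1 -> valid N l2 ->
  K (psub z (off L nu l1)) -> K (psub z (off L nu l2)) ->
  exists v1 v2, V0 L N nu v1 /\ V0 L N nu v2 /\ padd v1 (off L nu l1) = padd v2 (off L nu l2).
Proof.
  intros HL Hcl HK0 Hatt Hnest [a0 Ha0] n.
  induction n as [|n IH]; intros l1 l2 z Hn1 Hn2 Hv1 Hv2 HK1 HK2.
  - destruct l1; [|discriminate]. destruct l2; [|discriminate].
    exists a0, a0. auto.
  - assert (Hne1 : l1 <> []) by (intro; subst; discriminate).
    assert (Hne2 : l2 <> []) by (intro; subst; discriminate).
    destruct (exists_last Hne1) as [q1 [c Hq1]]. subst l1.
    destruct (exists_last Hne2) as [q2 [e Hq2]]. subst l2.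
    rewrite length_app in Hn1, Hn2; simpl in Hn1, Hn2.
    assert (Hl1 : length q1 = n) by lia. assert (Hl2 : length q2 = n) by lia.
    assert (Hv1' : valid N q1) by (intros b Hb; apply Hv1; apply in_or_app; left; auto).
    assert (Hc : (c < N)%nat) by (apply Hv1; apply in_or_app; right; simpl; auto).
    assert (Hv2' : valid N q2) by (intros b Hb; apply Hv2; apply in_or_app; left; auto).
    assert (He : (e < N)%nat) by (apply Hv2; apply in_or_app; right; simpl; auto).
    rewrite off_app, Hl1 in HK1 |- *. rewrite off_app, Hl2 in HK2 |- *.
    pose proof (Lpow_pos L n HL) as HLn.
    destruct (Nat.eq_dec c e) as [<- | Hce].
    + destruct (IH q1 q2 (psub z (pscale (L ^ S n) (nu c))) Hl1 Hl2 Hv1' Hv2') as [v1 [v2 [H1 [H2 H3]]]].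
      { eapply K_eq; [exact HK1|]. ptq; ring. }
      { eapply K_eq; [exact HK2|]. ptq; ring. }
      exists v1, v2. split; auto. split; auto.
      assert (E1 := f_equal fst H3); assert (E2 := f_equal snd H3).
      ptq; lra.
    + set (u := pscale (/ (L * L ^ n)) z).
      set (k1 := pscale L (psub u (nu c))).
      set (k2 := pscale L (psub u (nu e))).
      assert (Hk1 : K k1).
      { apply (cellK L N nu K HL Hatt q1 k1 Hv1'). rewrite Hl1. eapply K_eq; [exact HK1|].
        unfold k1, u; ptq; field; lra. }
      assert (Hk2 : K k2).
      { apply (cellK L N nu K HL Hatt q2 k2 Hv2'). rewrite Hl2. eapply K_eq; [exact HK2|].
        unfold k2, u; ptq; field; lra. }
      assert (Him : image (Psi L nu c) K u /\ image (Psi L nu e) K u).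
      { split.
        - exists k1. split; [exact Hk1|]. unfold k1; ptq; field; lra.
        - exists k2. split; [exact Hk2|]. unfold k2; ptq; field; lra. }
      apply (Hnest c e Hc He Hce u) in Him.
      destruct Him as [[y1 [Hy1 Hu1]] [y2 [Hy2 Hu2]]].
      apply (scale_back L n z) in Hu1; [|exact HL].
      apply (scale_back L n z) in Hu2; [|exact HL].
      destruct (corner L N nu K HL Hcl HK0 Hatt Hnest n q1 y1 Hl1 Hv1' Hy1) as [v1 [Hv01 Hw1]].
      { eapply K_eq; [exact HK1|]. rewrite Hu1 at 1. ptq; ring. }
      destruct (corner L N nu K HL Hcl HK0 Hatt Hnest n q2 y2 Hl2 Hv2' Hy2) as [v2 [Hv02 Hw2]].
      { eapply K_eq; [exact HK2|]. rewrite Hu2 at 1. ptq; ring. }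
      exists v1, v2. split; auto. split; auto.
      assert (A1 := f_equal fst Hw1); assert (A2 := f_equal snd Hw1).
      assert (B1 := f_equal fst Hw2); assert (B2 := f_equal snd Hw2).
      assert (C1 := f_equal fst Hu1); assert (C2 := f_equal snd Hu1).
      assert (D1 := f_equal fst Hu2); assert (D2 := f_equal snd Hu2).
      ptq; lra.
Qed.

Lemma fin_min (Q : nat -> R -> Prop) n :
  (forall i e e', Q i e -> 0 < e' <= e -> Q i e') ->
  (forall i, (i < n)%nat -> exists e, 0 < e /\ Q i e) ->
  exists e, 0 < e /\ forall i, (i < n)%nat -> Q i e.
Proof.
  intros Hm. induction n as [|n IH]; intros H.
  - exists 1. split; [lra|]. intros; lia.
  - destruct IH as [e1 [He1 H1]]. { intros i Hi; apply H; lia. }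
    destruct (H n ltac:(lia)) as [e2 [He2 H2]].
    exists (Rmin e1 e2). split. apply Rmin_pos; auto.
    intros i Hi. destruct (Nat.eq_dec i n) as [->|Hne].
    + eapply Hm; [exact H2|]. split. apply Rmin_pos; auto. apply Rmin_r.
    + eapply Hm; [apply H1; lia|]. split. apply Rmin_pos; auto. apply Rmin_l.
Qed.

Definition Sep (K : pt -> Prop) (d : pt) (e : R) : Prop :=
  (forall w, ~ (K w /\ K (padd w d))) ->
  forall k1 k2, K k1 -> K k2 -> e <= pnorm (psub (padd k1 d) k2).

Lemma sep_mono K d e e' : Sep K d e -> 0 < e' <= e -> Sep K d e'.
Proof. intros H He Hd k1 k2 H1 H2. specialize (H Hd k1 k2 H1 H2). lra. Qed.

Lemma sep_exists K d : compact_set K -> exists e, 0 < e /\ Sep K d e.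
Proof.
  intros Hc. destruct (classic (forall w, ~ (K w /\ K (padd w d)))) as [H|H].
  - destruct (sep_pos K d Hc H) as [e [He He']]. exists e. split; auto. intros _; auto.
  - exists 1. split; [lra|]. intros H'; contradiction.
Qed.

Definition fp (L : R) (nu : nat -> pt) (i : nat) : pt := pscale (L / (L - 1)) (nu i).
Definition Dd (L : R) (nu : nat -> pt) (a b i j : nat) : pt :=
  pscale L (padd (psub (nu a) (nu b)) (psub (fp L nu j) (fp L nu i))).

Lemma fix_fp L nu i v : 1 < L -> Psi L nu i v = v -> v = fp L nu i.
Proof.
  intros HL H. destruct (fix_comp L nu i v ltac:(lra) H) as [F1 F2].
  unfold fp, pscale. apply injective_projections; simpl.
  - apply (Rmult_eq_reg_l (L - 1)); [|lra].
    replace ((L - 1) * (L / (L - 1) * fst (nu i))) with (L * fst (nu i)) by (field; lra). lra.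
  - apply (Rmult_eq_reg_l (L - 1)); [|lra].
    replace ((L - 1) * (L / (L - 1) * snd (nu i))) with (L * snd (nu i)) by (field; lra). lra.
Qed.

Lemma delta_exists L N nu (K : pt -> Prop) : compact_set K ->
  exists e, 0 < e /\ forall a b i j, (a < N)%nat -> (b < N)%nat -> (i < N)%nat -> (j < N)%nat ->
    Sep K (Dd L nu a b i j) e.
Proof.
  intros Hc.
  assert (L4 : forall a b i, exists e, 0 < e /\ forall j, (j < N)%nat -> Sep K (Dd L nu a b i j) e).
  { intros a b i. apply (fin_min (fun j e => Sep K (Dd L nu a b i j) e)).
    - intros; eapply sep_mono; eauto.
    - intros; apply sep_exists; auto. }
  assert (L3 : forall a b, exists e, 0 < e /\ forall i, (i < N)%nat -> forall j, (j < N)%nat ->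
     Sep K (Dd L nu a b i j) e).
  { intros a b. apply (fin_min (fun i e => forall j, (j < N)%nat -> Sep K (Dd L nu a b i j) e)).
    - intros i0 e e' Hq He j Hj. eapply sep_mono; [apply Hq; auto | auto].
    - intros; apply L4. }
  assert (L2 : forall a, exists e, 0 < e /\ forall b, (b < N)%nat -> forall i, (i < N)%nat ->
     forall j, (j < N)%nat -> Sep K (Dd L nu a b i j) e).
  { intros a. apply (fin_min (fun b e => forall i, (i < N)%nat -> forall j, (j < N)%nat ->
       Sep K (Dd L nu a b i j) e)).
    - intros i0 e e' Hq He i Hi j Hj. eapply sep_mono; [apply Hq; auto | auto].
    - intros; apply L3. }
  assert (L1 : exists e, 0 < e /\ forall a, (a < N)%nat -> forall b, (b < N)%nat -> forall i, (i < N)%nat ->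
     forall j, (j < N)%nat -> Sep K (Dd L nu a b i j) e).
  { apply (fin_min (fun a e => forall b, (b < N)%nat -> forall i, (i < N)%nat ->
     forall j, (j < N)%nat -> Sep K (Dd L nu a b i j) e)).
    - intros i0 e e' Hq He b Hb i Hi j Hj. eapply sep_mono; [apply Hq; auto | auto].
    - intros; apply L2. }
  destruct L1 as [e [He H]].
  exists e. split; [exact He|]. intros a b i j Ha Hb Hi Hj. apply H; auto.
Qed.

Lemma mainP (L : R) (N : nat) (nu : nat -> pt) (K : pt -> Prop) (delta : R) :
  1 < L -> Defs.closed_set K -> (exists k, K k) ->
  (forall x, K x <-> exists i, (i < N)%nat /\ image (Psi L nu i) K x) ->
  nesting L N nu K -> (exists a, V0 L N nu a) -> 0 < delta ->
  (forall a b i j, (a < N)%nat -> (b < N)%nat -> (i < N)%nat -> (j < N)%nat ->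
    Sep K (Dd L nu a b i j) delta) ->
  forall l1 l2, length l1 = length l2 -> valid N l1 -> valid N l2 ->
  (forall z, ~ (K (psub z (off L nu l1)) /\ K (psub z (off L nu l2)))) ->
  forall x y, K (psub x (off L nu l1)) -> K (psub y (off L nu l2)) -> delta <= pdist x y.
Proof.
  intros HL Hcl HK0 Hatt Hnest HV0 Hd Hsep l1.
  induction l1 as [|a m1 IH]; intros l2 Hlen Hv1 Hv2 Hdis x y Hx Hy.
  - destruct l2; [|discriminate]. exfalso. destruct HK0 as [k Hk].
    apply (Hdis k). split; (eapply K_eq; [exact Hk|]); ptq; ring.
  - destruct l2 as [|b m2]; [discriminate|]. simpl in Hlen. injection Hlen as Hlen.
    assert (Ha : (a < N)%nat) by (apply Hv1; now left).
    assert (Hb : (b < N)%nat) by (apply Hv2; now left).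
    assert (Hv1' : valid N m1) by (intros c Hc; apply Hv1; now right).
    assert (Hv2' : valid N m2) by (intros c Hc; apply Hv2; now right).
    destruct (classic (exists z, K (psub z (off L nu m1)) /\ K (psub z (off L nu m2)))) as [[z [Hz1 Hz2]] | Hno].
    + destruct (vertex L N nu K HL Hcl HK0 Hatt Hnest HV0 (length m1) m1 m2 z eq_refl
        (eq_sym Hlen) Hv1' Hv2' Hz1 Hz2) as [v1 [v2 [Hw1 [Hw2 Hw]]]].
      destruct Hw1 as [[i1 [Hi1 Hf1]] _]. destruct Hw2 as [[i2 [Hi2 Hf2]] _].
      apply fix_fp in Hf1; [|exact HL]. apply fix_fp in Hf2; [|exact HL].
      subst v1 v2.
      assert (Hdd : Dd L nu a b i1 i2 = psub (off L nu (a :: m1)) (off L nu (b :: m2))).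
      { assert (E1 := f_equal fst Hw); assert (E2 := f_equal snd Hw).
        assert (G1 := f_equal (Rmult L) E1); assert (G2 := f_equal (Rmult L) E2).
        unfold Dd, fp in *; simpl off. ptq; lra. }
      specialize (Hsep a b i1 i2 Ha Hb Hi1 Hi2). rewrite Hdd in Hsep.
      assert (Hsep' := Hsep).
      unfold Sep in Hsep'.
      replace (pdist x y) with
        (pnorm (psub (padd (psub x (off L nu (a :: m1)))
           (psub (off L nu (a :: m1)) (off L nu (b :: m2)))) (psub y (off L nu (b :: m2))))).
      2:{ unfold pdist. f_equal. ptq; ring. }
      apply Hsep'; auto.
      intros w [Hw1 Hw2]. apply (Hdis (padd w (off L nu (a :: m1)))). split.
      * eapply K_eq; [exact Hw1|]. ptq; ring.
      * eapply K_eq; [exact Hw2|]. ptq; ring.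
    + assert (H1 : K (psub (pscale (/ L) x) (off L nu m1))).
      { eapply K_eq. apply (psi_K L N nu K a _ Hatt Ha Hx). simpl off. ptq; field; lra. }
      assert (H2 : K (psub (pscale (/ L) y) (off L nu m2))).
      { eapply K_eq. apply (psi_K L N nu K b _ Hatt Hb Hy). simpl off. ptq; field; lra. }
      assert (Hn : forall z, ~ (K (psub z (off L nu m1)) /\ K (psub z (off L nu m2)))).
      { intros z Hz. apply Hno. exists z. exact Hz. }
      specialize (IH m2 Hlen Hv1' Hv2' Hn _ _ H1 H2).
      replace (pdist (pscale (/ L) x) (pscale (/ L) y)) with (/ L * pdist x y) in IH.
      2:{ unfold pdist. replace (psub (pscale (/ L) x) (pscale (/ L) y)) with (pscale (/ L) (psub x y))
            by (ptq; ring).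
          rewrite pnorm_scale. rewrite Rabs_right; auto.
          apply Rle_ge, Rlt_le, Rinv_0_lt_compat; lra. }
      assert (0 <= pdist x y) by apply pnorm_pos.
      assert (0 < / L < 1).
      { split. apply Rinv_0_lt_compat; lra. apply (Rmult_lt_reg_l L); [lra|]. rewrite Rinv_r; lra. }
      nra.
Qed.

Lemma fold_off (L : R) (nu : nat -> pt) (w : nat -> nat) J k :
  fold_right padd (0, 0) (map (fun j => pscale (L ^ j) (nu (w j))) (seq (S k) J)) =
  pscale (L ^ k) (off L nu (map w (seq (S k) J))).
Proof.
  revert k. induction J as [|J IH]; intros k.
  - simpl. ptq; ring.
  - simpl seq. simpl map. simpl fold_right. rewrite IH. simpl off. ptq; ring.
Qed.

Lemma off_pad (L : R) (nu : nat -> pt) l k : nu O = (0, 0) ->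
  off L nu (l ++ repeat O k) = off L nu l.
Proof.
  intros H0. induction l as [|a l IH]; simpl.
  - induction k as [|k IHk]; simpl; auto. rewrite IHk, H0. ptq; ring.
  - rewrite IH; auto.
Qed.

Lemma complex_list (L : R) (N : nat) (nu : nat -> pt) (K D : pt -> Prop) :
  nu O = (0, 0) -> (2 <= N)%nat -> complex0 L N nu K D ->
  exists J, (1 <= J)%nat /\ forall M, (J <= M)%nat -> exists l, length l = M /\ valid N l /\
    forall x, D x <-> K (psub x (off L nu l)).
Proof.
  intros H0 HN [J [w [HJ [Hw HD]]]]. cbv zeta in HD.
  exists J. split; auto. intros M HM.
  exists (map w (seq 1 J) ++ repeat O (M - J)). split; [|split].
  - rewrite length_app, length_map, length_seq, repeat_length. lia.
  - intros a Ha. apply in_app_or in Ha. destruct Ha as [Ha|Ha].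
    + apply in_map_iff in Ha. destruct Ha as [j [<- Hj]]. apply in_seq in Hj. apply Hw. lia.
    + apply repeat_spec in Ha. subst. lia.
  - rewrite off_pad; auto. intros x. rewrite HD.
    pose proof (fold_off L nu w J O) as E. rewrite E.
    replace (pscale (L ^ 0) (off L nu (map w (seq 1 J)))) with (off L nu (map w (seq 1 J))).
    reflexivity. ptq; ring.
Qed.

Theorem lemmaA1 (L : R) (N : nat) (nu : nat -> pt) (K : pt -> Prop) :
  simple_nested_fractal L N nu K ->
  ~ pbounded (Kinf L K) ->
  exists delta, 0 < delta /\
    forall D1 D2 : pt -> Prop,
      complex0 L N nu K D1 -> complex0 L N nu K D2 ->
      (forall x, ~ (D1 x /\ D2 x)) ->
      forall x y, D1 x -> D2 y -> delta <= pdist x y.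
Proof.
  intros [HL [HN [Hnu0 [[HK0 [[Hcl Hbd] Hatt]] [[a0 [_ [_ [Ha0 _]]]] [_ [_ [_ Hnest]]]]]]]] _.
  destruct (delta_exists L N nu K (conj Hcl Hbd)) as [delta [Hd Hsep]].
  exists delta. split; [exact Hd|].
  intros D1 D2 HD1 HD2 Hdis x y Hx Hy.
  destruct (complex_list L N nu K D1 Hnu0 HN HD1) as [J1 [_ H1]].
  destruct (complex_list L N nu K D2 Hnu0 HN HD2) as [J2 [_ H2]].
  destruct (H1 (max J1 J2) ltac:(lia)) as [l1 [Hl1 [Hv1 E1]]].
  destruct (H2 (max J1 J2) ltac:(lia)) as [l2 [Hl2 [Hv2 E2]]].
  apply (mainP L N nu K delta HL Hcl HK0 Hatt Hnest (ex_intro _ a0 Ha0) Hd Hsep l1 l2).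
  - congruence.
  - exact Hv1.
  - exact Hv2.
  - intros z [Hz1 Hz2]. apply (Hdis z). split; [apply E1 | apply E2]; assumption.
  - apply E1; exact Hx.
  - apply E2; exact Hy.
Qed.
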